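(* Consider the problem $(P_1)$: $\min_{x\in Q}\{f(x):\mathbf{A}x=b\}$, and its dual function $\varphi$. Assume: (i) for some $\nu\in[0,1]$ the subgradients $\nabla\varphi(\lambda)=b-\mathbf{A}x(\lambda)$ used by the algorithm satisfy $\|\nabla\varphi(\lambda)-\nabla\varphi(\lambda')\|_2\le M_\nu\|\lambda-\lambda'\|_2^\nu$ for all $\lambda,\lambda'$, with $M_\nu<\infty$; (ii) the dual problem $\min_{\lambda}\varphi(\lambda)$ has a solution $\lambda^*$ with $\|\lambda^*\|_2\le R$ for some $R>0$; (iii) there is no duality gap: $\min_{x\in Q}\{f(x):\mathbf{A}x=b\}=-\varphi(\lambda^* )$. Let $\varepsilon>0$. Then for every $k\ge1$ the points $\hat x^k\in Q$, $\eta^k$ generated by Algorithm PDUGDsDR satisfy $$\|\mathbf{A}\hat x^k-b\|_2\le\frac{2R}{A_k}+\frac{\varepsilon}{2R},\qquad|\varphi(\eta^k)+f(\hat x^k)|\le\frac{2R^2}{A_k}+\frac\varepsilon2,$$ where $$A_k\ge c_\nu\,\frac{k^{\frac{1+3\nu}{1+\nu}}\varepsilon^{\frac{1-\nu}{1+\nu}}}{2^{\frac{1+3\nu}{1+\nu}}M_\nu^{\frac{2}{1+\nu}}},\qquad c_\nu=\left[\frac{1+\nu}{1-\nu}\right]^{\frac{1-\nu}{1+\nu}}\ (\nu<1),\ c_1=1.$$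
   Context: $E$ is a finite-dimensional real vector space, $Q\subseteq E$ is a closed convex set, $f:Q\to\mathbb{R}$ is convex, $H$ is a finite-dimensional real Euclidean space (identified with its dual $\Lambda=H^*$, with norm $\|\cdot\|_2$), $\mathbf{A}:E\to H$ is linear and $b\in H$. The dual objective (to be minimized) is $$\varphi(\lambda)=\langle\lambda,b\rangle+\max_{x\in Q}\big(-f(x)-\langle\mathbf{A}^T\lambda,x\rangle\big),\quad\lambda\in\Lambda,$$ where it is assumed that the maximum is attained for every $\lambda$; $x(\lambda)$ denotes a maximizer, and $b-\mathbf{A}x(\lambda)$ is then a subgradient of the convex function $\varphi$ at $\lambda$. Algorithm PDUGDsDR (input accuracy $\varepsilon>0$): set $A_0=0$, $\eta^0=\zeta^0=0$. For $k=0,1,2,\dots$: 1. $\beta_k\in\arg\min_{\beta\in[0,1]}\varphi(\zeta^k+\beta(\eta^k-\zeta^k))$, $\lambda^k=\zeta^k+\beta_k(\eta^k-\zeta^k)$. 2. Choose a maximizer $x(\lambda^k)$ such that $g^k:=\nabla\varphi(\lambda^k)=b-\mathbf{A}x(\lambda^k)$ satisfies $\langle g^k,\zeta^k-\lambda^k\rangle\ge0$ (such a choice exists). Let $h_{k+1}\in\arg\min_{h\ge0}\varphi(\lambda^k-hg^k)$ and $\eta^{k+1}=\lambda^k-h_{k+1}g^k$. 3. $a_{k+1}$ is the largest solution of $\varphi(\eta^{k+1})=\varphi(\lambda^k)-\frac{a_{k+1}^2}{2(A_k+a_{k+1})}\|g^k\|_2^2+\frac{\varepsilon a_{k+1}}{2(A_k+a_{k+1})}$;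 $A_{k+1}=A_k+a_{k+1}$. 4. $\zeta^{k+1}=\zeta^k-a_{k+1}g^k$. 5. $\hat x^{k+1}=\frac1{A_{k+1}}\sum_{i=0}^k a_{i+1}x(\lambda^i)$. All minima are assumed attained and $g^k\neq0$ for all iterations considered. *)

(* Defs.v *)
From HB Require Import structures.
From mathcomp Require Import all_boot.
From Stdlib Require Import Reals ClassicalEpsilon.
Open Scope R_scope.

(* Coordinate vectors: E ~ R^n, H ~ R^m (standard Euclidean structure). *)
Definition vec (n : nat) := 'I_n -> R.
Definition vzero {n} : vec n := fun _ => 0.
Definition vadd {n} (x y : vec n) : vec n := fun i => x i + y i.
Definition vsub {n} (x y : vec n) : vec n := fun i => x i - y i.
Definition vscale {n} (c : R) (x : vec n) : vec n := fun i => c * x i.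
Definition dot {n} (x y : vec n) : R := \big[Rplus/0]_(i < n) (x i * y i).
Definition norm2 {n} (x : vec n) : R := sqrt (dot x x).

Definition mat (m n : nat) := 'I_m -> 'I_n -> R.
Definition mapply {m n} (A : mat m n) (x : vec n) : vec m :=
  fun i => \big[Rplus/0]_(j < n) (A i j * x j).
Definition mtapply {m n} (A : mat m n) (l : vec m) : vec n :=
  fun j => \big[Rplus/0]_(i < m) (A i j * l i).

Definition powR (x y : R) : R :=
  if Req_EM_T x 0 then (if Req_EM_T y 0 then 1 else 0) else Rpower x y.

Definition convex_set {n} (Q : vec n -> Prop) : Prop :=
  forall x y t, Q x -> Q y -> 0 <= t <= 1 ->
    Q (vadd (vscale t x) (vscale (1 - t) y)).

Definition closed_vset {n} (Q : vec n -> Prop) : Prop :=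
  forall (u : nat -> vec n) (x : vec n),
    (forall k, Q (u k)) -> (forall j, Un_cv (fun k => u k j) (x j)) -> Q x.

Definition convex_on {n} (Q : vec n -> Prop) (f : vec n -> R) : Prop :=
  forall x y t, Q x -> Q y -> 0 <= t <= 1 ->
    f (vadd (vscale t x) (vscale (1 - t) y)) <= t * f x + (1 - t) * f y.

Definition is_maximizer {n} (Q : vec n -> Prop) (g : vec n -> R) (x : vec n) : Prop :=
  Q x /\ forall y, Q y -> g y <= g x.

Definition is_max_value {n} (Q : vec n -> Prop) (g : vec n -> R) (v : R) : Prop :=
  (exists x, Q x /\ g x = v) /\ forall x, Q x -> g x <= v.

Definition lagr {m n} (f : vec n -> R) (A : mat m n) (l : vec m) (x : vec n) : R :=
  - f x - dot (mtapply A l) x.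

Definition phi {m n} (Q : vec n -> Prop) (f : vec n -> R) (A : mat m n) (b : vec m)
  (l : vec m) : R :=
  dot l b + epsilon (inhabits 0) (fun v => is_max_value Q (lagr f A l) v).

Definition grad {m n} (A : mat m n) (b : vec m) (xsel : vec m -> vec n) (l : vec m) : vec m :=
  vsub b (mapply A (xsel l)).

Definition c_nu (nu : R) : R :=
  if Rlt_dec nu 1 then Rpower ((1 + nu) / (1 - nu)) ((1 - nu) / (1 + nu)) else 1.

Definition PDUGDsDR_run {m n} (Q : vec n -> Prop) (f : vec n -> R) (A : mat m n)
  (b : vec m) (eps : R) (xsel : vec m -> vec n)
  (beta : nat -> R) (lam eta zeta : nat -> vec m) (h a AA : nat -> R)
  (xhat : nat -> vec n) : Prop :=
  let ph := phi Q f A b in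
  let g := fun k => grad A b xsel (lam k) in
  AA 0%nat = 0 /\ eta 0%nat = vzero /\ zeta 0%nat = vzero /\
  forall k : nat,
    (0 <= beta k <= 1 /\
     (forall bb, 0 <= bb <= 1 ->
        ph (vadd (zeta k) (vscale (beta k) (vsub (eta k) (zeta k))))
        <= ph (vadd (zeta k) (vscale bb (vsub (eta k) (zeta k))))) /\
     lam k = vadd (zeta k) (vscale (beta k) (vsub (eta k) (zeta k)))) /\
    (g k <> vzero /\
     0 <= dot (g k) (vsub (zeta k) (lam k)) /\
     0 <= h (S k) /\
     (forall hh, 0 <= hh ->
        ph (vsub (lam k) (vscale (h (S k)) (g k)))
        <= ph (vsub (lam k) (vscale hh (g k)))) /\
     eta (S k) = vsub (lam k) (vscale (h (S k)) (g k))) /\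
    (let eqn := fun aa : R =>
        ph (eta (S k)) = ph (lam k) - aa ^ 2 / (2 * (AA k + aa)) * (norm2 (g k)) ^ 2
                         + eps * aa / (2 * (AA k + aa)) in
     AA k + a (S k) <> 0 /\ eqn (a (S k)) /\
     (forall aa, AA k + aa <> 0 -> eqn aa -> aa <= a (S k))) /\
    AA (S k) = AA k + a (S k) /\
    zeta (S k) = vsub (zeta k) (vscale (a (S k)) (g k)) /\
    xhat (S k) = (fun j => / AA (S k) * sum_f_R0 (fun i => a (S i) * xsel (lam i) j) k).

(* Main.v *)
Require Import Defs.
From HB Require Import structures.
From mathcomp Require Import all_boot.
From Stdlib Require Import Reals ClassicalEpsilon.
From Stdlib Require Import Lra Psatz FunctionalExtensionality.
Open Scope R_scope.

Set Implicit Arguments. Unset Strict Implicit.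

Lemma Rplus_assoc' : associative Rplus. Proof. intros x y z; ring. Qed.
HB.instance Definition _ := Monoid.isComLaw.Build R 0 Rplus Rplus_assoc' Rplus_comm Rplus_0_l.

Lemma sumD n (F G : 'I_n -> R) : \big[Rplus/0]_(i<n) (F i + G i) = \big[Rplus/0]_(i<n) F i + \big[Rplus/0]_(i<n) G i.
Proof. by rewrite big_split. Qed.

Lemma sumZ n c (F : 'I_n -> R) : \big[Rplus/0]_(i<n) (c * F i) = c * \big[Rplus/0]_(i<n) F i.
Proof.
elim: n F => [|n IH] F; first by rewrite !big_ord0; ring.
by rewrite !big_ord_recr /= IH Rmult_plus_distr_l.
Qed.

Lemma sum_ge0 n (F : 'I_n -> R) : (forall i, 0 <= F i) -> 0 <= \big[Rplus/0]_(i<n) F i.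
Proof.
move=> H; apply: (big_ind (fun x => 0 <= x)) => //; [lra | move=> x y; lra].
Qed.

Lemma sum_eq0 n (F : 'I_n -> R) : (forall i, 0 <= F i) -> \big[Rplus/0]_(i<n) F i = 0 -> forall i, F i = 0.
Proof.
move=> H Hs i; move: Hs; rewrite (bigD1 i) //=; set S := (X in F i + X = 0) => Hs.
have H3 : 0 <= S.
  rewrite /S; apply: (big_ind (fun x => 0 <= x)) => //; [lra | move=> x y; lra].
have := H i; lra.
Qed.

Lemma dot_sym n (x y : vec n) : dot x y = dot y x.
Proof. rewrite /dot; apply: eq_bigr => i _; ring. Qed.

Lemma dot_addl n (x y z : vec n) : dot (vadd x y) z = dot x z + dot y z.
Proof. rewrite /dot -sumD; apply: eq_bigr => i _; rewrite /vadd; ring. Qed.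

Lemma dot_subl n (x y z : vec n) : dot (vsub x y) z = dot x z - dot y z.
Proof.
have -> : dot x z - dot y z = dot x z + (-1) * dot y z by ring.
rewrite /dot -sumZ -sumD; apply: eq_bigr => i _; rewrite /vsub; ring.
Qed.

Lemma dot_scalel n c (x z : vec n) : dot (vscale c x) z = c * dot x z.
Proof. rewrite /dot -sumZ; apply: eq_bigr => i _; rewrite /vscale; ring. Qed.

Lemma dot_addr n (x y z : vec n) : dot z (vadd x y) = dot z x + dot z y.
Proof. by rewrite dot_sym dot_addl (dot_sym x) (dot_sym y). Qed.
Lemma dot_subr n (x y z : vec n) : dot z (vsub x y) = dot z x - dot z y.
Proof. by rewrite dot_sym dot_subl (dot_sym x) (dot_sym y). Qed.
Lemma dot_scaler n c (x z : vec n) : dot z (vscale c x) = c * dot z x.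
Proof. by rewrite dot_sym dot_scalel dot_sym. Qed.

Lemma dot_ge0 n (x : vec n) : 0 <= dot x x.
Proof. apply: sum_ge0 => i; nra. Qed.

Lemma dot_eq0 n (x : vec n) : dot x x = 0 -> x = vzero.
Proof.
move=> H; apply: functional_extensionality => i.
have := @sum_eq0 n (fun i => x i * x i) (fun i => ltac:(nra)) H i.
rewrite /vzero /=; nra.
Qed.

Lemma norm2_sq n (x : vec n) : norm2 x * norm2 x = dot x x.
Proof. rewrite /norm2; apply: sqrt_sqrt; apply: dot_ge0. Qed.

Lemma norm2_ge0 n (x : vec n) : 0 <= norm2 x.
Proof. apply: sqrt_pos. Qed.

Lemma dot0r n (x : vec n) : dot x vzero = 0.
Proof.
rewrite /dot /vzero (eq_bigr (fun _ => 0 * 0)); last by move=> i _; ring.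
rewrite sumZ; ring.
Qed.

Lemma CS n (x y : vec n) : dot x y <= norm2 x * norm2 y.
Proof.
have Hsq : dot x y * dot x y <= dot x x * dot y y.
  case: (Req_dec (dot y y) 0) => Hy.
    move/dot_eq0: Hy => ->; rewrite !dot0r; nra.
  have Hy0 : 0 < dot y y by have := dot_ge0 y; lra.
  set t := dot x y / dot y y.
  have := dot_ge0 (vsub x (vscale t y)).
  rewrite !dot_subl !dot_subr !dot_scalel !dot_scaler (dot_sym y x).
  have Ht : t * dot y y = dot x y by rewrite /t; field; lra.
  move=> H.
  have H1 : 0 <= dot x x - t * dot x y by nra.
  have H2 : 0 <= (dot x x - t * dot x y) * dot y y by nra.
  nra.
have Hn := norm2_ge0 x; have Hm := norm2_ge0 y.
rewrite -!norm2_sq in Hsq.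
case: (Rle_lt_dec (dot x y) (norm2 x * norm2 y)) => // Hc.
have H0 := Rmult_le_pos _ _ Hn Hm.
have : (norm2 x * norm2 y) * (norm2 x * norm2 y) < dot x y * dot x y by apply: Rmult_le_0_lt_compat; lra.
lra.
Qed.

Lemma norm2_scale n c (x : vec n) : norm2 (vscale c x) = Rabs c * norm2 x.
Proof.
rewrite /norm2 dot_scalel dot_scaler -Rmult_assoc sqrt_mult; [|nra|apply: dot_ge0].
by rewrite -sqrt_Rsqr_abs.
Qed.


Set Implicit Arguments. Unset Strict Implicit.

Lemma sumZr n c (F : 'I_n -> R) : \big[Rplus/0]_(i<n) (F i * c) = (\big[Rplus/0]_(i<n) F i) * c.
Proof.
rewrite Rmult_comm -sumZ; apply: eq_bigr => i _; ring.
Qed.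

Lemma dot_mt m n (A : mat m n) l x : dot (mtapply A l) x = dot l (mapply A x).
Proof.
rewrite /dot /mtapply /mapply.
rewrite (eq_bigr (fun j => \big[Rplus/0]_(i<m) (A i j * l i * x j))); last by move=> j _; rewrite sumZr.
rewrite exchange_big /=; apply: eq_bigr => i _.
rewrite -sumZ; apply: eq_bigr => j _; ring.
Qed.

Lemma phi_ge m n (Q : vec n -> Prop) f (A : mat m n) b l x :
  (forall l : vec m, exists x, is_maximizer Q (lagr f A l) x) ->
  Q x -> dot l b + lagr f A l x <= phi Q f A b l.
Proof.
move=> Hex Qx; rewrite /phi.
have [v Hv] : exists v, is_max_value Q (lagr f A l) v.
  have [y [Qy Hy]] := Hex l.
  by exists (lagr f A l y); split; [exists y|].
have := epsilon_spec (inhabits 0) (fun v => is_max_value Q (lagr f A l) v) (ex_intro _ v Hv).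
move=> [_ H]; have := H x Qx; lra.
Qed.

Lemma phi_val m n (Q : vec n -> Prop) f (A : mat m n) b xsel l :
  (forall l, is_maximizer Q (lagr f A l) (xsel l)) ->
  phi Q f A b l = - f (xsel l) + dot l (grad A b xsel l).
Proof.
move=> Hx; rewrite /phi.
have Hv : is_max_value Q (lagr f A l) (lagr f A l (xsel l)).
  have [Q1 H1] := Hx l.
  by split; [exists (xsel l)|].
have := epsilon_spec (inhabits 0) (fun v => is_max_value Q (lagr f A l) v) (ex_intro _ _ Hv).
set V := epsilon _ _.
move=> [[y [Qy Hy]] H].
have [Q1 H1] := Hx l.
have HV : V = lagr f A l (xsel l).
  have := H _ Q1; have := H1 _ Qy; lra.
rewrite HV /lagr /grad dot_mt dot_subr; ring.
Qed.

Lemma subgrad m n (Q : vec n -> Prop) f (A : mat m n) b xsel l l' :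
  (forall l, is_maximizer Q (lagr f A l) (xsel l)) ->
  phi Q f A b l + dot (vsub l' l) (grad A b xsel l) <= phi Q f A b l'.
Proof.
move=> Hx.
have Hex : forall l : vec m, exists x, is_maximizer Q (lagr f A l) x by move=> l0; exists (xsel l0).
have [Q1 _] := Hx l.
have := phi_ge b l' Hex Q1.
rewrite (phi_val b l Hx) /lagr dot_mt dot_subl /grad !dot_subr; lra.
Qed.


Unset Implicit Arguments. Set Strict Implicit.

Lemma young (x y t : R) : 0 <= t <= 1 ->
  exp (t * x + (1 - t) * y) <= t * exp x + (1 - t) * exp y.
Proof.
move=> Ht.
set G := exp (t * x + (1 - t) * y).
have HG : 0 < G by apply: exp_pos.
have Ex : exp x = G * exp ((1 - t) * (x - y)).
  rewrite /G -exp_plus; f_equal; ring.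
have Ey : exp y = G * exp (t * (y - x)).
  rewrite /G -exp_plus; f_equal; ring.
have H1 := exp_ineq1_le ((1 - t) * (x - y)).
have H2 := exp_ineq1_le (t * (y - x)).
rewrite Ex Ey.
have H3 : t * (G * (1 + (1 - t) * (x - y))) <= t * (G * exp ((1 - t) * (x - y))).
  apply: Rmult_le_compat_l; [lra|]; apply: Rmult_le_compat_l; lra.
have H4 : (1 - t) * (G * (1 + t * (y - x))) <= (1 - t) * (G * exp (t * (y - x))).
  apply: Rmult_le_compat_l; [lra|]; apply: Rmult_le_compat_l; lra.
have H5 : t * (G * (1 + (1 - t) * (x - y))) + (1 - t) * (G * (1 + t * (y - x))) = G by ring.
lra.
Qed.

Lemma tangent (x y p : R) : 0 < x -> 0 < y -> 1 <= p ->
  Rpower y p + p * Rpower y (p - 1) * (x - y) <= Rpower x p.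
Proof.
move=> Hx Hy Hp.
rewrite /Rpower.
set Lx := ln x; set Ly := ln y.
have ex : x = exp Lx by rewrite /Lx exp_ln.
have ey : y = exp Ly by rewrite /Ly exp_ln.
have Hip : 0 <= / p <= 1.
  split; first by apply: Rlt_le; apply: Rinv_0_lt_compat; lra.
  rewrite -Rinv_1; apply: Rinv_le_contravar; lra.
have Hy1 := young (p * (Lx - Ly)) 0 (/ p) Hip.
have E1 : / p * (p * (Lx - Ly)) + (1 - / p) * 0 = Lx - Ly by field; lra.
rewrite E1 exp_0 in Hy1.
have E2 : exp ((p - 1) * Ly) * (x - y) = exp (p * Ly) * (exp (Lx - Ly) - 1).
  rewrite {1}ex {1}ey.
  have -> : exp (p * Ly) * (exp (Lx - Ly) - 1) = exp (p * Ly + (Lx - Ly)) - exp (p * Ly) by rewrite exp_plus; ring.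
  have -> : exp ((p - 1) * Ly) * (exp Lx - exp Ly) = exp ((p - 1) * Ly + Lx) - exp ((p-1) * Ly + Ly) by rewrite !exp_plus; ring.
  f_equal; f_equal; ring.
have E3 : exp (p * Lx) = exp (p * Ly) * exp (p * (Lx - Ly)) by rewrite -exp_plus; f_equal; ring.
rewrite Rmult_assoc E2 E3.
have HE := exp_pos (p * Ly).
set D := exp (Lx - Ly) in Hy1 *.
set P := exp (p * (Lx - Ly)) in Hy1 *.
have : p * (D - 1) <= P - 1.
  have : p * D <= p * (/ p * P + (1 - / p)) by apply: Rmult_le_compat_l; lra.
  have -> : p * (/ p * P + (1 - / p)) = P + p - 1 by field; lra.
  lra.
move=> H.
have : exp (p * Ly) * (p * (D - 1)) <= exp (p * Ly) * (P - 1) by apply: Rmult_le_compat_l; lra.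
lra.
Qed.

Lemma archi (X Y Z : R) : 0 <= Z -> (forall N : nat, (1 <= N)%coq_nat -> X <= Y + Z / INR N) -> X <= Y.
Proof.
move=> HZ H.
case: (Rle_lt_dec X Y) => // Hc.
have [N HN] := INR_unbounded (Z / (X - Y)).
have HN0 : (1 <= N)%coq_nat.
  case: N HN => [|N] HN //; last lia.
  simpl in HN. have : 0 <= Z / (X - Y) by apply: Rmult_le_pos; [lra|apply: Rlt_le; apply: Rinv_0_lt_compat; lra]. lra.
have HNp : 0 < INR N by apply: lt_0_INR; lia.
have := H N HN0.
have : Z / INR N < X - Y.
  apply (Rmult_lt_reg_r (INR N)) => //.
  have -> : Z / INR N * INR N = Z by field; lra.
  have : Z < INR N * (X - Y).
    have : Z / (X - Y) * (X - Y) < INR N * (X - Y) by apply: Rmult_lt_compat_r; lra.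
    have -> : Z / (X - Y) * (X - Y) = Z by field; lra.
    done.
  lra.
lra.
Qed.


Set Implicit Arguments. Unset Strict Implicit.

Lemma descent m n (Q : vec n -> Prop) f (A : mat m n) b xsel nu M l u :
  (forall l, is_maximizer Q (lagr f A l) (xsel l)) ->
  0 <= nu <= 1 -> 0 < M ->
  (forall l l' : vec m,
     norm2 (vsub (grad A b xsel l) (grad A b xsel l')) <= M * powR (norm2 (vsub l l')) nu) ->
  0 < u -> 0 < norm2 (grad A b xsel l) ->
  phi Q f A b (vsub l (vscale u (grad A b xsel l)))
  <= phi Q f A b l - u * (norm2 (grad A b xsel l) * norm2 (grad A b xsel l))
     + M * Rpower (u * norm2 (grad A b xsel l)) (1 + nu) / (1 + nu).
Proof.
move=> Hx Hnu HM HH Hu.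
set g := grad A b xsel l.
set s := norm2 g => Hs.
set ph := phi Q f A b.
set P := fun t => vsub l (vscale t g).
have Hpsi : forall t, 0 < t -> s * s - s * M * Rpower (t * s) nu <= dot g (grad A b xsel (P t)).
  move=> t Ht.
  have E : vsub (P t) l = vscale (- t) g.
    by apply: functional_extensionality => i; rewrite /P /vsub /vscale; ring.
  have H1 := HH (P t) l.
  rewrite E norm2_scale Rabs_Ropp (Rabs_pos_eq t) in H1; last lra.
  have Hts : 0 < t * s by apply: Rmult_lt_0_compat.
  rewrite /powR in H1.
  destruct (Req_dec_T (t * norm2 g) 0) as [Hc|Hc]; simpl in H1; first by exfalso; move: Hts; rewrite /s; lra.
  rewrite -/s in H1.
  have H2 := CS (vscale (-1) g) (vsub (grad A b xsel (P t)) g).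
  rewrite dot_scalel norm2_scale Rabs_Ropp Rabs_R1 dot_subr in H2.
  rewrite -/s in H2.
  have Egg : dot g g = s * s by rewrite -norm2_sq.
  rewrite -/g in H1.
  have H3 : s * norm2 (vsub (grad A b xsel (P t)) g) <= s * (M * Rpower (t * s) nu).
    apply: Rmult_le_compat_l => //; lra.
  nra.
have Hsub : forall t t', ph (P t) <= ph (P t') - (t - t') * dot g (grad A b xsel (P t)).
  move=> t t'.
  have := subgrad b (P t) (P t') Hx.
  have -> : vsub (P t') (P t) = vscale (t - t') g.
    by apply: functional_extensionality => i; rewrite /P /vsub /vscale; ring.
  rewrite dot_scalel; rewrite /ph; lra.
have HP0 : P 0 = l by apply: functional_extensionality => i; rewrite /P /vsub /vscale; ring.
have Hnu1 : 0 < 1 + nu by lra.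
have Hind : forall hh, 0 < hh -> forall j : nat,
   ph (P (INR j * hh)) - ph l <= - (INR j * hh) * (s * s)
     + M / (1 + nu) * (Rpower ((INR j + 1) * hh * s) (1 + nu) - Rpower (hh * s) (1 + nu)).
  move=> hh Hh; elim=> [|j IH].
    rewrite /= Rmult_0_l HP0 Rplus_0_l Rmult_1_l; lra.
  rewrite S_INR.
  have Hy : 0 < (INR j + 1) * hh * s.
    apply: Rmult_lt_0_compat => //; apply: Rmult_lt_0_compat => //; have := pos_INR j; lra.
  have Hx' : 0 < (INR j + 1 + 1) * hh * s.
    apply: Rmult_lt_0_compat => //; apply: Rmult_lt_0_compat => //; have := pos_INR j; lra.
  have T := tangent _ _ _ Hx' Hy (ltac:(lra) : 1 <= 1 + nu).
  replace (1 + nu - 1) with nu in T by ring.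
  have Ht1 : 0 < (INR j + 1) * hh by apply: Rmult_lt_0_compat => //; have := pos_INR j; lra.
  have Hs1 := Hsub ((INR j + 1) * hh) (INR j * hh).
  have Hp1 := Hpsi _ Ht1.
  set Ry := Rpower ((INR j + 1) * hh * s) nu in T Hp1.
  have E1 : (INR j + 1 + 1) * hh * s - (INR j + 1) * hh * s = hh * s by ring.
  rewrite E1 in T.
  have E2 : (INR j + 1) * hh - INR j * hh = hh by ring.
  rewrite E2 in Hs1.
  have K1 : hh * dot g (grad A b xsel (P ((INR j + 1) * hh))) >= hh * (s * s - s * M * Ry).
    apply: Rle_ge; apply: Rmult_le_compat_l; lra.
  have HRy : 0 < Ry by apply: exp_pos.
  have K2 : M / (1 + nu) * ((1 + nu) * Ry * (hh * s)) = M * Ry * (hh * s) by field; lra.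
  have K3 : M / (1 + nu) * (Rpower ((INR j + 1) * hh * s) (1 + nu) + (1 + nu) * Ry * (hh * s))
          <= M / (1 + nu) * Rpower ((INR j + 1 + 1) * hh * s) (1 + nu).
    apply: Rmult_le_compat_l => //; apply: Rlt_le; apply: Rdiv_lt_0_compat; lra.
  rewrite Rmult_plus_distr_l K2 in K3.
  have Hs2 : 0 <= s by lra.
  nra.
have Hmain : forall N : nat, (1 <= N)%coq_nat ->
  ph (P u) <= ph l - u * (s * s) + M * Rpower (u * s) (1 + nu) / (1 + nu)
               + 3 * (M * Rpower (u * s) (1 + nu) / (1 + nu)) / INR N.
  move=> N HN.
  have HNp : 0 < INR N by apply: lt_0_INR; lia.
  have Hh : 0 < u / INR N by apply: Rdiv_lt_0_compat.
  have H := Hind _ Hh N.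
  replace (INR N * (u / INR N)) with u in H by (field; lra).
  have E : (INR N + 1) * (u / INR N) * s = ((INR N + 1) / INR N) * (u * s) by field; lra.
  rewrite E -Rpower_mult_distr in H; last (by apply: Rmult_lt_0_compat); last first.
    apply: Rdiv_lt_0_compat; lra.
  have Hb1 : 1 <= (INR N + 1) / INR N.
    apply (Rmult_le_reg_r (INR N)) => //. have -> : (INR N + 1) / INR N * INR N = INR N + 1 by field; lra. lra.
  have Hle : Rpower ((INR N + 1) / INR N) (1 + nu) <= Rpower ((INR N + 1) / INR N) (INR 2).
    apply: Rle_Rpower => //; simpl; lra.
  rewrite Rpower_pow in Hle; last lra.
  have Hsq : ((INR N + 1) / INR N) ^ 2 <= 1 + 3 / INR N.
    have -> : ((INR N + 1) / INR N) ^ 2 = 1 + 2 / INR N + / INR N * / INR N by field; lra.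
    have : / INR N <= 1.
      have H1N : 1 <= INR N by (change 1 with (INR 1); apply le_INR; lia).
      rewrite -Rinv_1; apply: Rinv_le_contravar; lra.
    have : 0 < / INR N by apply: Rinv_0_lt_compat.
    have -> : 3 / INR N = 2 / INR N + / INR N by field; lra.
    have -> : 2 / INR N = 2 * / INR N by [].
    nra.
  have Hr : 0 < Rpower (u * s) (1 + nu) by apply: exp_pos.
  have Hr2 : 0 < Rpower (u / INR N * s) (1 + nu) by apply: exp_pos.
  set W := Rpower (u * s) (1 + nu) in Hr H *.
  set V := Rpower ((INR N + 1) / INR N) (1 + nu) in Hle H.
  have HVW : V * W <= (1 + 3 / INR N) * W by apply: Rmult_le_compat_r; lra.
  have HMn : 0 < M / (1 + nu) by apply: Rdiv_lt_0_compat.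
  have K : M / (1 + nu) * (V * W) <= M / (1 + nu) * ((1 + 3 / INR N) * W) by apply: Rmult_le_compat_l; lra.
  have K2 : M / (1 + nu) * ((1 + 3 / INR N) * W) = M * W / (1 + nu) + 3 * (M * W / (1 + nu)) / INR N by field; lra.
  have K3 : 0 <= M / (1 + nu) * Rpower (u / INR N * s) (1 + nu) by nra.
  rewrite /P in H *. lra.
apply: (archi _ _ _ _ Hmain).
apply: Rmult_le_pos; [lra|]. apply: Rlt_le; apply: Rdiv_lt_0_compat => //.
apply: Rmult_lt_0_compat => //; apply: exp_pos.
Qed.


Unset Implicit Arguments. Set Strict Implicit.

Lemma exp_mono x y : x <= y -> exp x <= exp y.
Proof. move=> H; case: (Rle_lt_or_eq_dec _ _ H) => [Hl|->]; [apply: Rlt_le; apply: exp_increasing|]; lra. Qed.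

Lemma ln_mono x y : 0 < x -> x <= y -> ln x <= ln y.
Proof. move=> Hx H; case: (Rle_lt_or_eq_dec _ _ H) => [Hl|->]; [apply: Rlt_le; apply: ln_increasing|]; lra. Qed.

Lemma KL nu M u s d : 0 <= nu <= 1 -> 0 < M -> 0 < u -> 0 < s -> 0 < d ->
  u * (s * s) / 2 + d / 2 <= M * Rpower (u * s) (1 + nu) / (1 + nu) ->
  ln (c_nu nu) + (1 - nu) / (1 + nu) * ln d - 2 / (1 + nu) * ln M <= ln u.
Proof.
move=> Hnu HM Hu Hs Hd H.
have Hus2 : 0 < u * (s * s) by apply: Rmult_lt_0_compat => //; apply: Rmult_lt_0_compat.
have Hus : 0 < u * s by apply: Rmult_lt_0_compat.
rewrite /c_nu; case: (Rlt_dec nu 1) => Hn /=.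
- set th := (1 + nu) / 2.
  set X := u * (s * s) / (1 + nu).
  set Y := d / (1 - nu).
  have HX : 0 < X by rewrite /X; apply: Rdiv_lt_0_compat; lra.
  have HY : 0 < Y by rewrite /Y; apply: Rdiv_lt_0_compat; lra.
  have Hth : 0 <= th <= 1 by rewrite /th; split; lra.
  have Hy := young (ln X) (ln Y) th Hth.
  rewrite !exp_ln // in Hy.
  have E : th * X + (1 - th) * Y = u * (s * s) / 2 + d / 2 by rewrite /th /X /Y; field; lra.
  rewrite E in Hy.
  have Hr : 0 < Rpower (u * s) (1 + nu) by apply: exp_pos.
  have Hl := ln_mono _ _ (exp_pos _) (Rle_trans _ _ _ Hy H).
  rewrite ln_exp in Hl.
  have eX : ln X = ln u + 2 * ln s - ln (1 + nu).
    have Hi1 : 0 < / (1 + nu) by apply: Rinv_0_lt_compat; lra.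
    have Hss : 0 < s * s by apply: Rmult_lt_0_compat.
    rewrite /X /Rdiv (ln_mult _ _ Hus2 Hi1) (ln_mult _ _ Hu Hss) (ln_mult _ _ Hs Hs) ln_Rinv; lra.
  have eY : ln Y = ln d - ln (1 - nu).
    rewrite /Y /Rdiv ln_mult ?ln_Rinv; try lra; apply: Rinv_0_lt_compat; lra.
  have eR : ln (M * Rpower (u * s) (1 + nu) / (1 + nu)) = ln M + (1 + nu) * (ln u + ln s) - ln (1 + nu).
    have Hi1 : 0 < / (1 + nu) by apply: Rinv_0_lt_compat; lra.
    have HMR : 0 < M * Rpower (u * s) (1 + nu) by apply: Rmult_lt_0_compat.
    rewrite /Rdiv (ln_mult _ _ HMR Hi1) (ln_mult _ _ HM Hr) ln_Rinv; last lra.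
    rewrite /Rpower ln_exp (ln_mult _ _ Hu Hs); lra.
  have eC : ln (Rpower ((1 + nu) / (1 - nu)) ((1 - nu) / (1 + nu))) = (1 - nu) / (1 + nu) * (ln (1 + nu) - ln (1 - nu)).
    rewrite /Rpower ln_exp /Rdiv ln_mult ?ln_Rinv; try lra. apply: Rinv_0_lt_compat; lra.
  rewrite eX eY eR in Hl; rewrite eC.
  set lu := ln u in Hl *; set ls := ln s in Hl *; set ld := ln d in Hl *;
  set L1 := ln (1 + nu) in Hl *; set L2 := ln (1 - nu) in Hl *; set LM := ln M in Hl *.
  rewrite /th in Hl.
  have key : 0 <= 2 * LM + (1 + nu) * lu - (1 - nu) * (L1 - L2 + ld) by nra.
  have E2 : lu - ((1 - nu) * / (1 + nu) * (L1 + - L2) + (1 - nu) * / (1 + nu) * ld - 2 * / (1 + nu) * LM)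
      = (2 * LM + (1 + nu) * lu - (1 - nu) * (L1 - L2 + ld)) / (1 + nu) by field; lra.
  have : 0 <= (2 * LM + (1 + nu) * lu - (1 - nu) * (L1 - L2 + ld)) / (1 + nu).
    apply: Rmult_le_pos => //; apply: Rlt_le; apply: Rinv_0_lt_compat; lra.
  lra.
- have Hn1 : nu = 1 by lra.
  subst nu.
  rewrite ln_1.
  have E : Rpower (u * s) (1 + 1) = (u * s) ^ 2.
    have -> : 1 + 1 = INR 2 by simpl; ring.
    apply: Rpower_pow; nra.
  rewrite E in H.
  have H1 : 1 < M * u.
    have Hss : 0 < u * (s * s) by nra.
    have : u * (s * s) < M * (u * s) ^ 2 by nra.
    have -> : M * (u * s) ^ 2 = (M * u) * (u * (s * s)) by ring.
    move=> H2. nra.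
  have := ln_increasing _ _ Rlt_0_1 H1.
  rewrite ln_1 ln_mult //. 
  have -> : (1 - 1) / (1 + 1) = 0 by field.
  have -> : 2 / (1 + 1) = 1 by field.
  lra.
Qed.

Lemma GS (LK p A A' a kr : R) : 1 <= p <= 2 -> 1 <= kr -> 0 < A -> 0 < a -> A' = A + a ->
  LK + p * ln (kr / 2) <= ln A -> LK + (p - 1) * ln A' <= p * ln a ->
  LK + p * ln ((kr + 1) / 2) <= ln A'.
Proof.
move=> Hp Hk HA Ha HA' H1 H2.
have HA'p : 0 < A' by lra.
set ka := exp (LK / p).
set B := exp (ln A / p).
set B' := exp (ln A' / p).
set R' := exp ((p - 1) * (ln A' / p)).
have Hka : 0 < ka by apply: exp_pos.
have HB : 0 < B by apply: exp_pos.
have HB' : 0 < B' by apply: exp_pos.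
have HR' : 0 < R' by apply: exp_pos.
have Hk2 : 0 < kr / 2 by lra.
have Hb1 : ka * (kr / 2) <= B.
  rewrite /ka /B -{1}(exp_ln (kr / 2)) // -exp_plus; apply: exp_mono.
  apply (Rmult_le_reg_r p); [lra|].
  have -> : (LK / p + ln (kr / 2)) * p = LK + p * ln (kr / 2) by field; lra.
  have -> : ln A / p * p = ln A by field; lra.
  done.
have Ha1 : ka * R' <= a.
  rewrite /ka /R' -exp_plus -(exp_ln a) //; apply: exp_mono.
  apply (Rmult_le_reg_r p); [lra|].
  have -> : (LK / p + (p - 1) * (ln A' / p)) * p = LK + (p - 1) * ln A' by field; lra.
  have -> : ln a * p = p * ln a by ring.
  done.
have T := tangent B B' p HB HB' (proj1 Hp).
have EB : Rpower B p = A.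
  rewrite /Rpower /B ln_exp. have -> : p * (ln A / p) = ln A by field; lra. by rewrite exp_ln.
have EB' : Rpower B' p = A'.
  rewrite /Rpower /B' ln_exp. have -> : p * (ln A' / p) = ln A' by field; lra. by rewrite exp_ln.
have ER : Rpower B' (p - 1) = R' by rewrite /Rpower /B' ln_exp.
rewrite EB EB' ER in T.
have Hd : ka * R' <= p * R' * (B' - B) by lra.
have Hd2 : ka <= p * (B' - B).
  apply (Rmult_le_reg_r R') => //. lra.
have Hd3 : ka / 2 <= B' - B.
  have : ka / 2 <= ka / p.
    apply: Rmult_le_compat_l; [lra|]. apply: Rinv_le_contravar; lra.
  have : ka / p <= B' - B.
    apply (Rmult_le_reg_r p); [lra|]. have -> : ka / p * p = ka by field; lra. lra.
  lra.
have Hfin : ka * ((kr + 1) / 2) <= B' by lra.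
have Hl := ln_mono _ _ (ltac:(apply: Rmult_lt_0_compat; lra) : 0 < ka * ((kr + 1) / 2)) Hfin.
have e1 : ln (ka * ((kr + 1) / 2)) = LK / p + ln ((kr + 1) / 2).
  rewrite ln_mult //; last lra. by rewrite /ka ln_exp.
have e2 : ln B' = ln A' / p by rewrite /B' ln_exp.
rewrite e1 e2 in Hl.
apply (Rmult_le_compat_l p) in Hl; last lra.
move: Hl.
have -> : p * (ln A' / p) = ln A' by field; lra.
have -> : p * (LK / p + ln ((kr + 1) / 2)) = LK + p * ln ((kr + 1) / 2) by field; lra.
done.
Qed.

Lemma GS0 (LK p a : R) : 1 <= p <= 2 -> 0 < a ->
  LK + (p - 1) * ln a <= p * ln a ->
  LK + p * ln (1 / 2) <= ln a.
Proof.
move=> Hp Ha H.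
have : ln (1 / 2) < 0.
  have -> : 0 = ln 1 by rewrite ln_1.
  apply: ln_increasing; lra.
move=> Hl. nra.
Qed.


Set Implicit Arguments. Unset Strict Implicit.

Fixpoint ssum (F : nat -> R) (k : nat) : R :=
  match k with O => 0 | S k => ssum F k + F k end.

Lemma sum_f_ssum F k : sum_f_R0 F k = ssum F (S k).
Proof. elim: k => [|k IH] /=; [ring | rewrite IH /=; ring]. Qed.

Lemma ssum_ext F G k : (forall i, F i = G i) -> ssum F k = ssum G k.
Proof. move=> H; elim: k => [|k IH] //=; by rewrite IH H. Qed.

Lemma ssumD F G k : ssum (fun i => F i + G i) k = ssum F k + ssum G k.
Proof. elim: k => [|k IH] /=; [ring | rewrite IH; ring]. Qed.

Lemma ssumZ c F k : ssum (fun i => c * F i) k = c * ssum F k.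
Proof. elim: k => [|k IH] /=; [ring | rewrite IH; ring]. Qed.

Lemma dot_ssum n (X : nat -> vec n) (w : nat -> R) (z : vec n) k :
  dot (fun j => ssum (fun i => w i * X i j) k) z = ssum (fun i => w i * dot (X i) z) k.
Proof.
elim: k => [|k IH] /=.
  rewrite /dot (eq_bigr (fun _ => 0 * 0)); last by move=> i _; ring.
  rewrite sumZ; ring.
rewrite -IH /dot -sumZ -sumD; apply: eq_bigr => i _; ring.
Qed.

Lemma jensen n (Q : vec n -> Prop) f (w : nat -> R) (X : nat -> vec n) :
  convex_set Q -> convex_on Q f -> (forall i, 0 < w i) -> (forall i, Q (X i)) ->
  forall k, (1 <= k)%coq_nat ->
  0 < ssum w k /\
  Q (fun j => / ssum w k * ssum (fun i => w i * X i j) k) /\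
  f (fun j => / ssum w k * ssum (fun i => w i * X i j) k) <= / ssum w k * ssum (fun i => w i * f (X i)) k.
Proof.
move=> HQ Hf Hw HX.
elim=> [|k IH] Hk; first lia.
case: (Nat.eq_dec k 0) => [->|Hk0].
  have Hw0 := Hw 0%nat.
  have E : (fun j => / ssum w 1 * ssum (fun i => w i * X i j) 1) = X 0%nat.
    apply: functional_extensionality => j /=; field; lra.
  rewrite E /=. split; first lra. split => //. 
  have -> : / (0 + w 0%nat) * (0 + w 0%nat * f (X 0%nat)) = f (X 0%nat) by field; lra.
  lra.
have [HW [HQk Hfk]] := IH ltac:(lia).
set W := ssum w k in HW HQk Hfk *.
set P := (fun j => / W * ssum (fun i => w i * X i j) k) in HQk Hfk *.
have Hwk := Hw k.
set t := W / (W + w k).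
have Ht : 0 <= t <= 1.
  rewrite /t; split; first by apply: Rlt_le; apply: Rdiv_lt_0_compat; lra.
  apply (Rmult_le_reg_r (W + w k)); [lra|]. have -> : W / (W + w k) * (W + w k) = W by field; lra. lra.
have E : (fun j => / ssum w k.+1 * ssum (fun i => w i * X i j) k.+1) = vadd (vscale t P) (vscale (1 - t) (X k)).
  apply: functional_extensionality => j /=.
  rewrite /vadd /vscale /P /t -/W. field. lra.
rewrite E /=. rewrite -/W.
split; first lra.
split; first by apply: HQ.
apply: Rle_trans; first by apply: Hf.
have H1 : t * f P <= t * (/ W * ssum (fun i => w i * f (X i)) k) by apply: Rmult_le_compat_l; lra.
have -> : / (W + w k) * (ssum (fun i => w i * f (X i)) k + w k * f (X k)) =
  t * (/ W * ssum (fun i => w i * f (X i)) k) + (1 - t) * f (X k) by rewrite /t; field; lra.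
lra.
Qed.


Unset Implicit Arguments. Set Strict Implicit.

Lemma norm2_pos m (g : vec m) : g <> vzero -> 0 < norm2 g.
Proof.
move=> Hg. have H0 := norm2_ge0 g.
case: (Rle_lt_or_eq_dec _ _ H0) => // He.
exfalso; apply: Hg; apply: dot_eq0; rewrite -norm2_sq -He; ring.
Qed.

Arguments norm2_pos {m g}.

Lemma expand n (u v : vec n) c : dot (vadd u (vscale c v)) (vadd u (vscale c v)) = dot u u + 2 * c * dot v u + c ^ 2 * dot v v.
Proof.
rewrite dot_addl !dot_addr !dot_scalel !dot_scaler (dot_sym u v); ring.
Qed.

Theorem mainTheorem13 (n m : nat) (Q : vec n -> Prop) (f : vec n -> R)
  (A : mat m n) (b : vec m) (nu M Rad eps : R) (xsel : vec m -> vec n)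
  (lamstar : vec m)
  (beta : nat -> R) (lam eta zeta : nat -> vec m) (h a AA : nat -> R)
  (xhat : nat -> vec n) :
  convex_set Q -> closed_vset Q -> convex_on Q f ->
  (forall l : vec m, exists x, is_maximizer Q (lagr f A l) x) ->
  (forall l : vec m, is_maximizer Q (lagr f A l) (xsel l)) ->
  (* (i) Hoelder continuity of the subgradients used *)
  0 <= nu <= 1 -> 0 < M ->
  (forall l l' : vec m,
     norm2 (vsub (grad A b xsel l) (grad A b xsel l')) <= M * powR (norm2 (vsub l l')) nu) ->
  (* (ii) dual solution with bounded norm *)
  0 < Rad -> norm2 lamstar <= Rad ->
  (forall l : vec m, phi Q f A b lamstar <= phi Q f A b l) ->
  (* (iii) no duality gap *)
  (exists xs : vec n, Q xs /\ mapply A xs = b /\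
     (forall x, Q x -> mapply A x = b -> f xs <= f x) /\
     f xs = - phi Q f A b lamstar) ->
  0 < eps ->
  PDUGDsDR_run Q f A b eps xsel beta lam eta zeta h a AA xhat ->
  forall k : nat, (1 <= k)%nat ->
    Q (xhat k) /\
    norm2 (vsub (mapply A (xhat k)) b) <= 2 * Rad / AA k + eps / (2 * Rad) /\
    Rabs (phi Q f A b (eta k) + f (xhat k)) <= 2 * Rad ^ 2 / AA k + eps / 2 /\
    AA k >= c_nu nu * Rpower (INR k) ((1 + 3 * nu) / (1 + nu))
                    * Rpower eps ((1 - nu) / (1 + nu))
            / (Rpower 2 ((1 + 3 * nu) / (1 + nu)) * Rpower M (2 / (1 + nu))).
Proof.
move=> HQc HQcl Hfc Hex Hx Hnu HM HH HR Hls Hopt _ Heps [HA0 [He0 [Hz0 Hrun]]].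
have Hpos : forall k, 0 <= AA k -> 0 < a k.+1.
  move=> k HAk.
  have [[Hb1 [Hb2 Hb3]] [[Hg1 [Hg2 [Hg3 [Hg4 Hg5]]]] [[Ha1 [Ha2 Ha3]] _]]] := Hrun k.
  have Hs := norm2_pos Hg1.
  set G := norm2 (grad A b xsel (lam k)) ^ 2 in Ha2 Ha3 *.
  have HG : 0 < G by rewrite /G; nra.
  set d := phi Q f A b (eta k.+1) - phi Q f A b (lam k).
  have Hd : d <= 0.
    have := Hg4 0 (Rle_refl 0).
    have -> : vsub (lam k) (vscale 0 (grad A b xsel (lam k))) = lam k.
      by apply: functional_extensionality => i; rewrite /vsub /vscale; ring.
    rewrite -Hg5 /d; lra.
  set E := eps - 2 * d.
  set D := E * E - 8 * G * AA k * d.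
  have HD : 0 <= D.
    have H1 : 0 <= G * AA k by apply: Rmult_le_pos; lra.
    have H2 : 0 <= G * AA k * (- d) by apply: Rmult_le_pos; lra.
    rewrite /D; nra.
  set sq := sqrt D.
  have Hsq : sq * sq = D by rewrite /sq sqrt_sqrt.
  have Hsq0 : 0 <= sq by apply: sqrt_pos.
  set a0 := (E + sq) / (2 * G).
  have Ha0 : 0 < a0 by rewrite /a0; apply: Rdiv_lt_0_compat; rewrite /E; lra.
  have H2G : 2 * G * a0 = E + sq by rewrite /a0; field; lra.
  have Hquad : G * a0 ^ 2 + (2 * d - eps) * a0 + 2 * AA k * d = 0.
    have : 4 * G * (G * a0 ^ 2 + (2 * d - eps) * a0 + 2 * AA k * d) = 0.
      have -> : 4 * G * (G * a0 ^ 2 + (2 * d - eps) * a0 + 2 * AA k * d)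
         = (2 * G * a0) * (2 * G * a0) - 2 * E * (2 * G * a0) + 8 * G * AA k * d by rewrite /E; ring.
      rewrite H2G. rewrite /D in Hsq. nra.
    move=> H4. nra.
  have Hroot := Ha3 a0 ltac:(lra).
  have : a0 <= a k.+1.
    apply: Hroot.
    have Hdd : phi Q f A b (eta k.+1) = phi Q f A b (lam k) + d by rewrite /d; ring.
    rewrite Hdd.
    have Hk : d - (- (a0 ^ 2 / (2 * (AA k + a0)) * G) + eps * a0 / (2 * (AA k + a0))) = 0.
      have -> : d - (- (a0 ^ 2 / (2 * (AA k + a0)) * G) + eps * a0 / (2 * (AA k + a0))) =
       (G * a0 ^ 2 + (2 * d - eps) * a0 + 2 * AA k * d) / (2 * (AA k + a0)) by field; lra.
      rewrite Hquad; field; lra.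
    lra.
  lra.
have HAge : forall k, 0 <= AA k.
  elim=> [|k IH]; first by rewrite HA0; lra.
  have [_ [_ [_ [HAS _]]]] := Hrun k.
  rewrite HAS; have := Hpos k IH; lra.
have Hapos : forall k, 0 < a k.+1 by move=> k; apply: Hpos.
have HAsum : forall k, AA k = ssum (fun i => a i.+1) k.
  elim=> [|k IH] /=; first by [].
  have [_ [_ [_ [HAS _]]]] := Hrun k. by rewrite HAS IH.
have Hinv : forall k (l : vec m),
    AA k * phi Q f A b (eta k) - AA k * eps / 2 + dot (vsub l (zeta k)) (vsub l (zeta k)) / 2
    <= dot l l / 2 + ssum (fun i => a i.+1 * (- f (xsel (lam i)) + dot (grad A b xsel (lam i)) l)) k.
  elim=> [|k IH] l.
    rewrite HA0 Hz0 /=.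
    have -> : vsub l vzero = l by apply: functional_extensionality => i; rewrite /vsub /vzero; ring.
    lra.
  have [[Hb1 [Hb2 Hb3]] [[Hg1 [Hg2 [Hg3 [Hg4 Hg5]]]] [[Ha1 [Ha2 Ha3]] [HAS [HzS _]]]]] := Hrun k.
  rewrite [ssum _ k.+1]/=.
  set gk := grad A b xsel (lam k) in Hg1 Hg2 Hg4 Hg5 Ha2 HzS *.
  have Hle : phi Q f A b (lam k) <= phi Q f A b (eta k).
    have := Hb2 1 ltac:(lra).
    rewrite -Hb3.
    have -> : vadd (zeta k) (vscale 1 (vsub (eta k) (zeta k))) = eta k.
      by apply: functional_extensionality => i; rewrite /vadd /vscale /vsub; ring.
    done.
  have Hval := phi_val b (lam k) Hx.
  rewrite -/gk dot_sym in Hval.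
  have HG : norm2 gk ^ 2 = dot gk gk by rewrite -norm2_sq; ring.
  rewrite HG in Ha2.
  have Hexp : dot (vsub l (zeta k.+1)) (vsub l (zeta k.+1)) =
     dot (vsub l (zeta k)) (vsub l (zeta k)) + 2 * a k.+1 * (dot gk l - dot gk (zeta k)) + a k.+1 ^ 2 * dot gk gk.
    have -> : vsub l (zeta k.+1) = vadd (vsub l (zeta k)) (vscale (a k.+1) gk).
      by rewrite HzS; apply: functional_extensionality => i; rewrite /vadd /vscale /vsub; ring.
    rewrite expand (dot_subr l (zeta k) gk); ring.
  rewrite (dot_subr (zeta k) (lam k) gk) in Hg2.
  have HA' : AA k + a k.+1 <> 0 by exact Ha1.
  have HAP : (AA k + a k.+1) * phi Q f A b (eta k.+1) =
     (AA k + a k.+1) * phi Q f A b (lam k) - a k.+1 ^ 2 * dot gk gk / 2 + eps * a k.+1 / 2.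
    rewrite Ha2; field; exact HA'.
  have HAk := HAge k.
  have Hak := Hapos k.
  have P1 : AA k * phi Q f A b (lam k) <= AA k * phi Q f A b (eta k) by apply: Rmult_le_compat_l.
  have P2 : 0 <= a k.+1 * (dot gk (zeta k) - dot gk (lam k)) by apply: Rmult_le_pos; lra.
  have IHl := IH l.
  rewrite HAS Hexp.
  rewrite Hval in P1 HAP.
  nra.
move=> k Hk; case: k Hk => [|k] // _.
have HAk := HAge k.
have Hak := Hapos k.
have [_ [_ [_ [HAS [_ Hxh]]]]] := Hrun k.
have HW : 0 < AA k.+1 by rewrite HAS; lra.
have Exh : xhat k.+1 = (fun j => / AA k.+1 * ssum (fun i => a i.+1 * xsel (lam i) j) k.+1).
  rewrite Hxh; apply: functional_extensionality => j; by rewrite sum_f_ssum.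
have [_ [HQx Hfx]] := jensen (w := fun i => a i.+1) (X := fun i => xsel (lam i)) HQc Hfc Hapos
   (fun i => proj1 (Hx (lam i))) (k := k.+1) ltac:(lia).
rewrite -HAsum -Exh in HQx Hfx.
set xh := xhat k.+1 in Exh HQx Hfx *.
set W := AA k.+1 in HW Exh HQx Hfx *.
set Sf := ssum (fun i => a i.+1 * f (xsel (lam i))) k.+1 in Hfx.
have HWf : W * f xh <= Sf.
  have := Rmult_le_compat_l W _ _ (Rlt_le _ _ HW) Hfx.
  have -> : W * (/ W * Sf) = Sf by field; lra. done.
have Hdx : forall w, dot xh w = / W * ssum (fun i => a i.+1 * dot (xsel (lam i)) w) k.+1.
  move=> w; rewrite Exh.
  change (fun j => / W * ssum (fun i => a i.+1 * xsel (lam i) j) k.+1) with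
    (vscale (/ W) (fun j => ssum (fun i => a i.+1 * xsel (lam i) j) k.+1)).
  by rewrite dot_scalel dot_ssum.
have HS : forall l, ssum (fun i => a i.+1 * (- f (xsel (lam i)) + dot (grad A b xsel (lam i)) l)) k.+1
   = - Sf + W * (dot b l - dot (mapply A xh) l).
  move=> l.
  rewrite (@ssum_ext _ (fun i => (-1) * (a i.+1 * f (xsel (lam i))) + (dot b l * a i.+1 + (-1) * (a i.+1 * dot (xsel (lam i)) (mtapply A l))))); last first.
    move=> i; rewrite /grad dot_subl (dot_sym (mapply A _) l) -dot_mt (dot_sym (mtapply A l)); ring.
  rewrite !ssumD !ssumZ -HAsum.
  rewrite (dot_sym (mapply A xh) l) -dot_mt (dot_sym (mtapply A l) xh) Hdx /W /Sf.
  field; lra.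
have Hstar : forall l, phi Q f A b (eta k.+1) + f xh <= eps / 2 + dot l l / (2 * W) - dot (vsub (mapply A xh) b) l.
  move=> l.
  have H1 := Hinv k.+1 l.
  rewrite HS -/W in H1.
  have HZ := dot_ge0 (vsub l (zeta k.+1)).
  have H2 : W * (phi Q f A b (eta k.+1) + f xh) <= W * (eps / 2 + dot l l / (2 * W) - dot (vsub (mapply A xh) b) l).
    rewrite dot_subl.
    have -> : W * (eps / 2 + dot l l / (2 * W) - (dot (mapply A xh) l - dot b l)) =
      W * eps / 2 + dot l l / 2 + W * (dot b l - dot (mapply A xh) l) by field; lra.
    lra.
  apply: (Rmult_le_reg_l W) => //.
set r := vsub (mapply A xh) b.
set rho := norm2 r.
have Hrho : 0 <= rho := norm2_ge0 r.
have HU : phi Q f A b (eta k.+1) + f xh + 2 * Rad * rho <= eps / 2 + 2 * Rad ^ 2 / W.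
  case: (Rle_lt_or_eq_dec _ _ Hrho) => Hr.
    have := Hstar (vscale (2 * Rad / rho) r).
    rewrite dot_scalel !dot_scaler -norm2_sq -/rho.
    have -> : 2 * Rad / rho * (2 * Rad / rho * (rho * rho)) / (2 * W) = 2 * Rad ^ 2 / W by field; split; lra.
    have -> : 2 * Rad / rho * (rho * rho) = 2 * Rad * rho by field; repeat split; lra.
    lra.
  have := Hstar vzero.
  rewrite !dot0r -Hr.
  have : 0 <= 2 * Rad ^ 2 / W by apply: Rlt_le; apply: Rdiv_lt_0_compat => //; nra.
  have -> : 0 / (2 * W) = 0 by field; lra.
  lra.
have HL : - (Rad * rho) <= phi Q f A b (eta k.+1) + f xh.
  have H1 := Hopt (eta k.+1).
  have H2 := phi_ge b lamstar Hex HQx.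
  rewrite /lagr dot_mt in H2.
  have H3 : dot lamstar r <= norm2 lamstar * rho := CS lamstar r.
  have H4 : norm2 lamstar * rho <= Rad * rho by apply: Rmult_le_compat_r.
  have E : dot lamstar b - f xh - dot lamstar (mapply A xh) = - f xh - dot lamstar r.
    rewrite /r dot_subr; ring.
  lra.
split; first done.
split.
  have : Rad * rho <= 2 * Rad ^ 2 / W + eps / 2 by lra.
  move=> H.
  apply: (Rmult_le_reg_l Rad) => //.
  have -> : Rad * (2 * Rad / W + eps / (2 * Rad)) = 2 * Rad ^ 2 / W + eps / 2 by field; lra.
  done.
split.
  apply: Rabs_le; split; last by nra.
  have : 0 <= Rad * rho by apply: Rmult_le_pos; lra.
  nra.
clear Hstar HU HL HS Hdx HWf.
set q := (1 - nu) / (1 + nu).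
set p := (1 + 3 * nu) / (1 + nu).
set mm := 2 / (1 + nu).
have Hc : 0 < c_nu nu.
  rewrite /c_nu; case: (Rlt_dec nu 1) => _ /=; [apply: exp_pos | lra].
set LK := ln (c_nu nu) + q * ln eps - mm * ln M.
have Hpq : p = 2 - q by rewrite /p /q; field; lra.
have Hp12 : 1 <= p <= 2.
  rewrite /p; split.
    apply (Rmult_le_reg_r (1 + nu)); [lra|]. have -> : (1 + 3 * nu) / (1 + nu) * (1 + nu) = 1 + 3 * nu by field; lra. lra.
  apply (Rmult_le_reg_r (1 + nu)); [lra|]. have -> : (1 + 3 * nu) / (1 + nu) * (1 + nu) = 1 + 3 * nu by field; lra. lra.
have Hstep : forall j, LK + (p - 1) * ln (AA j.+1) <= p * ln (a j.+1).
  move=> j.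
  have [_ [[Hg1 [_ [_ [Hg4 Hg5]]]] [[_ [Ha2 _]] [HASj _]]]] := Hrun j.
  set gj := grad A b xsel (lam j) in Hg1 Hg4 Hg5 Ha2.
  have Hs := norm2_pos Hg1.
  set sj := norm2 gj in Hs Ha2.
  have Haj := Hapos j.
  have HAj := HAge j.
  set Aj' := AA j.+1.
  have HA' : 0 < Aj' by rewrite /Aj' HASj; lra.
  set u := a j.+1 * a j.+1 / Aj'.
  set dl := eps * a j.+1 / Aj'.
  have Hu : 0 < u by rewrite /u; apply: Rdiv_lt_0_compat => //; nra.
  have Hdl : 0 < dl by rewrite /dl; apply: Rdiv_lt_0_compat => //; nra.
  have Hdes := @descent m n Q f A b xsel nu M (lam j) u Hx Hnu HM HH Hu Hs.
  rewrite -/gj -/sj in Hdes.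
  have H4 := Hg4 u (Rlt_le _ _ Hu).
  rewrite -Hg5 Ha2 in H4.
  have E1 : a j.+1 ^ 2 / (2 * (AA j + a j.+1)) * sj ^ 2 = u * (sj * sj) / 2 by rewrite /u /Aj' HASj; field; lra.
  have E2 : eps * a j.+1 / (2 * (AA j + a j.+1)) = dl / 2 by rewrite /dl /Aj' HASj; field; lra.
  rewrite E1 E2 in H4.
  have Hkl := KL _ _ _ _ _ Hnu HM Hu Hs Hdl ltac:(lra).
  have Elu : ln u = 2 * ln (a j.+1) - ln Aj'.
    rewrite /u /Rdiv ln_mult ?ln_mult ?ln_Rinv //; try lra; try nra.
    apply: Rinv_0_lt_compat => //.
  have Eld : ln dl = ln eps + ln (a j.+1) - ln Aj'.
    rewrite /dl /Rdiv ln_mult ?ln_mult ?ln_Rinv //; try lra; try nra.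
    apply: Rinv_0_lt_compat => //.
  rewrite Elu Eld -/q -/mm in Hkl.
  rewrite /LK Hpq. nra.
have HG : forall j, (1 <= j)%coq_nat -> LK + p * ln (INR j / 2) <= ln (AA j).
  elim=> [|j IH] Hj; first lia.
  have [_ [_ [_ [HASj _]]]] := Hrun j.
  case: (Nat.eq_dec j 0) => [Hj0|Hj0].
    subst j. rewrite HASj HA0 Rplus_0_l /=.
    have := Hstep 0%nat. rewrite HASj HA0 Rplus_0_l => H.
    apply: GS0 => //.
  have HAj : 0 < AA j.
    case: j IH Hj Hj0 HASj => [|j] // IH Hj Hj0 HASj.
    have [_ [_ [_ [HASj' _]]]] := Hrun j.
    rewrite HASj'; have := HAge j; have := Hapos j; lra.
  rewrite S_INR.
  apply: (GS _ _ _ _ _ _ Hp12 _ HAj (Hapos j) HASj (IH ltac:(lia)) (Hstep j)).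
  change 1 with (INR 1); apply: le_INR; lia.
have Hfin := HG k.+1 ltac:(lia).
rewrite /W; apply: Rle_ge.
have HWp : 0 < AA k.+1 by [].
rewrite -(exp_ln (AA k.+1)) //.
have HK : 0 < INR k.+1 by apply: lt_0_INR; lia.
have -> : c_nu nu * Rpower (INR k.+1) p * Rpower eps q / (Rpower 2 p * Rpower M mm)
   = exp (LK + p * ln (INR k.+1 / 2)).
  rewrite /LK /Rpower /Rdiv (ln_mult _ _ HK) ?ln_Rinv; try lra.
  have -> : ln (c_nu nu) + q * ln eps - mm * ln M + p * (ln (INR k.+1) + - ln 2)
    = ln (c_nu nu) + p * ln (INR k.+1) + q * ln eps + (- (p * ln 2)) + (- (mm * ln M)) by ring.
  rewrite !exp_plus !exp_Ropp exp_ln //.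
  field; split; apply: Rgt_not_eq; apply: exp_pos.
by apply: exp_mono.
Qed.
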